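(* Let $n \ge 2$, $k \ge 1$ and $n_i, m_i \in \mathbb{Z}\setminus\{0\}$ for $1 \le i \le k$, and let $G$ be the group presented by $\mathcal{P}_n(n_1,\dots,n_k;m_1,\dots,m_k)$. Then: (i) if $N$ denotes the normal subgroup of $G$ generated by $xyxy^{-1}$, there is a group isomorphism $G/N \cong Q_{4n}$ sending $x \mapsto x$, $y \mapsto y$; (ii) the abelianisations satisfy $G^{\mathrm{ab}} \cong Q_{4n}^{\mathrm{ab}}$.
   Context: $Q_{4n} = \langle x, y \mid x^n y^{-2}, xyxy^{-1} \rangle$. With $n_{k+1} = 1 - \sum_{i=1}^k n_i$, $m_{k+1} = 1 - \sum_{i=1}^k m_i$, $\mathcal{P}_n(n_1,\dots,n_k;m_1,\dots,m_k) = \langle x, y \mid x^n y^{-2},\ x^{n_1} y x^{m_1} y^{-1} \cdots x^{n_{k+1}} y x^{m_{k+1}} y^{-1} \rangle$. *)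

(* Defs.v *)
From Stdlib Require Import ZArith List.
Import ListNotations.
Open Scope Z_scope.

Record Grp := {
  gcar :> Type;
  gmul : gcar -> gcar -> gcar;
  gone : gcar;
  ginv : gcar -> gcar;
  gmulA : forall a b c, gmul a (gmul b c) = gmul (gmul a b) c;
  gmul1g : forall a, gmul gone a = a;
  gmulg1 : forall a, gmul a gone = a;
  gmulVg : forall a, gmul (ginv a) a = gone;
  gmulgV : forall a, gmul a (ginv a) = gone
}.

Arguments gmul {g}.
Arguments gone {g}.
Arguments ginv {g}.

Fixpoint gpowN {G : Grp} (g : G) (n : nat) : G :=
  match n with O => gone | S m => gmul g (gpowN g m) end.

Definition gpowZ {G : Grp} (g : G) (z : Z) : G :=
  match z with
  | Z0 => gone
  | Zpos p => gpowN g (Pos.to_nat p)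
  | Zneg p => ginv (gpowN g (Pos.to_nat p))
  end.

Definition is_hom {G H : Grp} (f : G -> H) : Prop :=
  forall a b, f (gmul a b) = gmul (f a) (f b).

Definition surj {A B : Type} (f : A -> B) : Prop := forall b, exists a, f a = b.

Definition abelian (G : Grp) : Prop := forall a b : G, gmul a b = gmul b a.

Inductive gen2 {G : Grp} (a b : G) : G -> Prop :=
| gen2_1 : gen2 a b gone
| gen2_a : gen2 a b a
| gen2_b : gen2 a b b
| gen2_mul : forall u v, gen2 a b u -> gen2 a b v -> gen2 a b (gmul u v)
| gen2_inv : forall u, gen2 a b u -> gen2 a b (ginv u).

Inductive ncl {G : Grp} (r : G) : G -> Prop :=
| ncl_1 : ncl r gone
| ncl_conj : forall g, ncl r (gmul g (gmul r (ginv g)))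
| ncl_mul : forall u v, ncl r u -> ncl r v -> ncl r (gmul u v)
| ncl_inv : forall u, ncl r u -> ncl r (ginv u).

Definition comm {G : Grp} (g h : G) : G :=
  gmul (ginv g) (gmul (ginv h) (gmul g h)).

Inductive derived (G : Grp) : G -> Prop :=
| der_1 : derived G gone
| der_comm : forall g h, derived G (comm g h)
| der_mul : forall u v, derived G u -> derived G v -> derived G (gmul u v)
| der_inv : forall u, derived G u -> derived G (ginv u).

(* A relator family: for every group H and images of x, y, the list of
   relator words evaluated there. *)
Definition relators := forall H : Grp, H -> H -> list H.

Definition presents (G : Grp) (x y : G) (R : relators) : Prop :=
  (forall r, In r (R G x y) -> r = gone) /\
  (forall g : G, gen2 x y g) /\
  (forall (H : Grp) (c d : H), (forall r, In r (R H c d) -> r = gone) ->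
     exists f : G -> H, is_hom f /\ f x = c /\ f y = d).

Definition Q4n_rels (n : nat) : relators := fun H x y =>
  [ gmul (gpowN x n) (ginv (gpowN y 2));
    gmul x (gmul y (gmul x (ginv y))) ].

Definition sumZ (l : list Z) : Z := fold_right Z.add 0 l.

Definition Pn_word {H : Grp} (x y : H) (ns ms : list Z) : H :=
  fold_right (fun p acc =>
      gmul (gmul (gpowZ x (fst p)) (gmul y (gmul (gpowZ x (snd p)) (ginv y)))) acc)
    gone
    (combine (ns ++ [1 - sumZ ns]) (ms ++ [1 - sumZ ms])).

Definition Pn_rels (n : nat) (ns ms : list Z) : relators := fun H x y =>
  [ gmul (gpowN x n) (ginv (gpowN y 2)); Pn_word x y ns ms ].

(* Main.v *)
Require Import Defs.
From Stdlib Require Import ZArith List Lia.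
From Stdlib Require Import ClassicalEpsilon FunctionalExtensionality PropExtensionality ProofIrrelevance.
Import ListNotations.

Lemma mulKg (G : Grp) (a b : G) : gmul (ginv a) (gmul a b) = b.
Proof. rewrite gmulA, gmulVg, gmul1g. reflexivity. Qed.
Lemma mulVKg (G : Grp) (a b : G) : gmul a (gmul (ginv a) b) = b.
Proof. rewrite gmulA, gmulgV, gmul1g. reflexivity. Qed.
Lemma inv_uniq (G : Grp) (a b : G) : gmul a b = gone -> b = ginv a.
Proof. intro H. rewrite <- (mulKg G a b), H, gmulg1. reflexivity. Qed.
Lemma ginv_inv (G : Grp) (a : G) : ginv (ginv a) = a.
Proof. symmetry. apply inv_uniq. apply gmulVg. Qed.
Lemma ginv_mul (G : Grp) (a b : G) : ginv (gmul a b) = gmul (ginv b) (ginv a).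
Proof. symmetry. apply inv_uniq. rewrite <- gmulA, mulVKg, gmulgV. reflexivity. Qed.
Lemma ginv_one (G : Grp) : ginv (@gone G) = gone.
Proof. symmetry. apply inv_uniq. apply gmul1g. Qed.

Ltac gsimpl := repeat progress (rewrite ?ginv_mul, ?ginv_inv, ?ginv_one, ?gmul1g, ?gmulg1,
  ?gmulVg, ?gmulgV, ?mulKg, ?mulVKg, <- ?gmulA).

Lemma hom_one (G H : Grp) (f : G -> H) : is_hom f -> f gone = gone.
Proof.
  intro hf. pose proof (hf gone gone) as E. rewrite gmulg1 in E.
  assert (E2 : gmul (ginv (f gone)) (f gone) = gmul (ginv (f gone)) (gmul (f gone) (f gone)))
    by (rewrite <- E; reflexivity).
  rewrite mulKg, gmulVg in E2. symmetry; exact E2.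
Qed.

Lemma hom_inv (G H : Grp) (f : G -> H) : is_hom f -> forall a, f (ginv a) = ginv (f a).
Proof. intros hf a. apply inv_uniq. rewrite <- hf, gmulgV. apply hom_one; auto. Qed.

Lemma hom_gpowN (G H : Grp) (f : G -> H) : is_hom f -> forall a n, f (gpowN a n) = gpowN (f a) n.
Proof. intros hf a n. induction n; simpl. apply hom_one; auto. rewrite hf, IHn. reflexivity. Qed.

Lemma hom_gpowZ (G H : Grp) (f : G -> H) : is_hom f -> forall a z, f (gpowZ a z) = gpowZ (f a) z.
Proof.
  intros hf a z. destruct z; simpl. apply hom_one; auto. apply hom_gpowN; auto.
  rewrite hom_inv, hom_gpowN; auto.
Qed.

Lemma hom_agree (G H : Grp) (f g : G -> H) (x y : G) : is_hom f -> is_hom g ->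
  f x = g x -> f y = g y -> forall u, gen2 x y u -> f u = g u.
Proof.
  intros hf hg ex ey u Hu. induction Hu; auto.
  - rewrite !hom_one; auto.
  - rewrite hf, hg, IHHu1, IHHu2; auto.
  - rewrite hom_inv, (hom_inv _ _ g), IHHu; auto.
Qed.

Lemma gpowN_succ_r (G : Grp) (a : G) m : gpowN a (S m) = gmul (gpowN a m) a.
Proof.
  induction m; simpl. rewrite gmulg1, gmul1g; reflexivity.
  simpl in IHm. rewrite IHm at 1. apply gmulA.
Qed.

Lemma gpowZ_nat (G : Grp) (a : G) m : gpowZ a (Z.of_nat m) = gpowN a m.
Proof. destruct m; simpl. reflexivity. rewrite SuccNat2Pos.id_succ. reflexivity. Qed.

Lemma gpowZ_negnat (G : Grp) (a : G) m : gpowZ a (- Z.of_nat m) = ginv (gpowN a m).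
Proof. destruct m; simpl. rewrite ginv_one; reflexivity. rewrite SuccNat2Pos.id_succ. reflexivity. Qed.

Lemma gpowZ_succ (G : Grp) (a : G) z : gpowZ a (z + 1) = gmul (gpowZ a z) a.
Proof.
  destruct (Z_le_gt_dec 0 z).
  - assert (exists m, z = Z.of_nat m) as [m ->] by (exists (Z.to_nat z); lia).
    replace (Z.of_nat m + 1)%Z with (Z.of_nat (S m)) by lia.
    rewrite !gpowZ_nat, gpowN_succ_r. reflexivity.
  - assert (exists m, z = - Z.of_nat (S m))%Z as [m ->] by (exists (Z.to_nat (-z-1)); lia).
    replace (- Z.of_nat (S m) + 1)%Z with (- Z.of_nat m)%Z by lia.
    rewrite !gpowZ_negnat. simpl gpowN. rewrite ginv_mul, <- gmulA, gmulVg, gmulg1. reflexivity.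
Qed.

Lemma gpowZ_pred (G : Grp) (a : G) z : gpowZ a (z - 1) = gmul (gpowZ a z) (ginv a).
Proof.
  destruct (Z_le_gt_dec z 0).
  - assert (exists m, z = - Z.of_nat m)%Z as [m ->] by (exists (Z.to_nat (-z)); lia).
    replace (- Z.of_nat m - 1)%Z with (- Z.of_nat (S m))%Z by lia.
    rewrite !gpowZ_negnat. simpl gpowN. rewrite ginv_mul. reflexivity.
  - assert (exists m, z = Z.of_nat (S m)) as [m ->] by (exists (Z.to_nat (z-1)); lia).
    replace (Z.of_nat (S m) - 1)%Z with (Z.of_nat m) by lia.
    rewrite !gpowZ_nat, gpowN_succ_r. gsimpl. reflexivity.
Qed.

Lemma gpowZ_add (G : Grp) (a : G) z w : gpowZ a (z + w) = gmul (gpowZ a z) (gpowZ a w).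
Proof.
  pattern w; apply Z.peano_ind; clear w.
  - rewrite Z.add_0_r. simpl. rewrite gmulg1. reflexivity.
  - intros w IH. replace (z + Z.succ w)%Z with ((z + w) + 1)%Z by lia.
    replace (Z.succ w) with (w + 1)%Z by lia. rewrite !gpowZ_succ, IH, gmulA. reflexivity.
  - intros w IH. replace (z + Z.pred w)%Z with ((z + w) - 1)%Z by lia.
    replace (Z.pred w) with (w - 1)%Z by lia. rewrite !gpowZ_pred, IH, gmulA. reflexivity.
Qed.

Lemma gpowZ_opp (G : Grp) (a : G) z : gpowZ a (- z) = ginv (gpowZ a z).
Proof. destruct z; simpl. rewrite ginv_one; reflexivity. reflexivity. rewrite ginv_inv; reflexivity. Qed.

Lemma conj_gpowN (G : Grp) (a b : G) : gmul b (gmul a (ginv b)) = ginv a ->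
  forall k, gmul b (gmul (gpowN a k) (ginv b)) = ginv (gpowN a k).
Proof.
  intros E k. induction k; simpl.
  - rewrite gmul1g, gmulgV, ginv_one. reflexivity.
  - transitivity (gmul (gmul b (gmul a (ginv b))) (gmul b (gmul (gpowN a k) (ginv b)))).
    + gsimpl. reflexivity.
    + rewrite E, IHk, <- ginv_mul. f_equal. rewrite <- gpowN_succ_r. reflexivity.
Qed.

Lemma conj_gpowZ (G : Grp) (a b : G) : gmul b (gmul a (ginv b)) = ginv a ->
  forall z, gmul b (gmul (gpowZ a z) (ginv b)) = ginv (gpowZ a z).
Proof.
  intros E z. destruct z; simpl.
  - rewrite gmul1g, gmulgV, ginv_one. reflexivity.
  - apply conj_gpowN; auto.
  - rewrite ginv_inv. transitivity (ginv (gmul b (gmul (gpowN a (Pos.to_nat p)) (ginv b)))).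
    + gsimpl. reflexivity.
    + rewrite conj_gpowN; auto. apply ginv_inv.
Qed.

Lemma fold_pow (H : Grp) (c : H) (g : Z * Z -> H -> H) (phi : Z * Z -> Z) (l : list (Z * Z)) :
  (forall p acc, g p acc = gmul (gpowZ c (phi p)) acc) ->
  fold_right g gone l = gpowZ c (fold_right (fun p s => phi p + s)%Z 0%Z l).
Proof.
  intro Hg. induction l; simpl. reflexivity.
  rewrite Hg, IHl, gpowZ_add. reflexivity.
Qed.

Lemma sumZ_app1 l a : sumZ (l ++ [a]) = (sumZ l + a)%Z.
Proof. induction l; unfold sumZ in *; simpl in *; lia. Qed.

Lemma sum_combine_diff (l1 l2 : list Z) : length l1 = length l2 ->
  fold_right (fun p s => (fst p - snd p) + s)%Z 0%Z (combine l1 l2) = (sumZ l1 - sumZ l2)%Z.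
Proof.
  revert l2; induction l1; destruct l2; simpl; intros; try discriminate. reflexivity.
  rewrite IHl1 by lia. unfold sumZ; simpl. lia.
Qed.

Lemma sum_combine_add (l1 l2 : list Z) : length l1 = length l2 ->
  fold_right (fun p s => (fst p + snd p) + s)%Z 0%Z (combine l1 l2) = (sumZ l1 + sumZ l2)%Z.
Proof.
  revert l2; induction l1; destruct l2; simpl; intros; try discriminate. reflexivity.
  rewrite IHl1 by lia. unfold sumZ; simpl. lia.
Qed.

Lemma word_Q (H : Grp) (c d : H) (ns ms : list Z) :
  gmul c (gmul d (gmul c (ginv d))) = gone -> length ms = length ns -> Pn_word c d ns ms = gone.
Proof.
  intros E Hl. assert (C : gmul d (gmul c (ginv d)) = ginv c) by (apply inv_uniq; exact E).
  unfold Pn_word. rewrite (fold_pow H c _ (fun p => fst p - snd p)%Z).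
  - cbv beta. rewrite sum_combine_diff by (rewrite !length_app; simpl; lia).
    rewrite !sumZ_app1. replace (sumZ ns + (1 - sumZ ns) - (sumZ ms + (1 - sumZ ms)))%Z with 0%Z by lia.
    reflexivity.
  - intros p acc. rewrite (conj_gpowZ _ c d C), <- gpowZ_opp, <- gpowZ_add.
    replace (fst p - snd p)%Z with (fst p + - snd p)%Z by lia. reflexivity.
Qed.

Lemma word_ab (H : Grp) (c d : H) (ns ms : list Z) :
  abelian H -> length ms = length ns -> Pn_word c d ns ms = gmul c c.
Proof.
  intros ab Hl.
  unfold Pn_word. rewrite (fold_pow H c _ (fun p => fst p + snd p)%Z).
  - cbv beta. rewrite sum_combine_add by (rewrite !length_app; simpl; lia).
    rewrite !sumZ_app1. replace (sumZ ns + (1 - sumZ ns) + (sumZ ms + (1 - sumZ ms)))%Z with 2%Z by lia.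
    simpl. rewrite gmulg1. reflexivity.
  - intros p acc. rewrite (ab d (gmul (gpowZ c (snd p)) (ginv d))).
    rewrite <- (gmulA _ (gpowZ c (snd p))), gmulVg, gmulg1, gpowZ_add. reflexivity.
Qed.

Lemma hom_word (G H : Grp) (f : G -> H) : is_hom f -> forall c d ns ms,
  f (Pn_word c d ns ms) = Pn_word (f c) (f d) ns ms.
Proof.
  intros hf c d ns ms. unfold Pn_word.
  induction (combine (ns ++ [(1 - sumZ ns)%Z]) (ms ++ [(1 - sumZ ms)%Z])); simpl.
  - apply hom_one; auto.
  - rewrite !hf, !(hom_gpowZ _ _ f hf), (hom_inv _ _ f hf), IHl. reflexivity.
Qed.
Record nsub (G : Grp) (N : G -> Prop) : Prop := {
  ns1 : N gone;
  nsmul : forall u v, N u -> N v -> N (gmul u v);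
  nsinv : forall u, N u -> N (ginv u);
  nsconj : forall g u, N u -> N (gmul g (gmul u (ginv g))) }.

Lemma N_eq (G : Grp) (N : G -> Prop) a b : N a -> a = b -> N b.
Proof. intros; subst; auto. Qed.

Definition eqv (G : Grp) (N : G -> Prop) (a b : G) : Prop := N (gmul (ginv a) b).

Lemma eqv_refl G N (HN : nsub G N) a : eqv G N a a.
Proof. unfold eqv; rewrite gmulVg; apply (ns1 _ _ HN). Qed.
Lemma eqv_sym G N (HN : nsub G N) a b : eqv G N a b -> eqv G N b a.
Proof. intro H; apply (nsinv _ _ HN) in H; unfold eqv; eapply N_eq; [exact H| gsimpl; reflexivity]. Qed.
Lemma eqv_trans G N (HN : nsub G N) a b c : eqv G N a b -> eqv G N b c -> eqv G N a c.
Proof. intros H1 H2; unfold eqv; eapply N_eq; [exact (nsmul _ _ HN _ _ H1 H2)| gsimpl; reflexivity]. Qed.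
Lemma eqv_mul G N (HN : nsub G N) a a' b b' : eqv G N a a' -> eqv G N b b' ->
  eqv G N (gmul a b) (gmul a' b').
Proof.
  intros Ha Hb; unfold eqv; eapply N_eq;
  [exact (nsmul _ _ HN _ _ (nsconj _ _ HN (ginv b) _ Ha) Hb)| gsimpl; reflexivity].
Qed.
Lemma eqv_inv G N (HN : nsub G N) a a' : eqv G N a a' -> eqv G N (ginv a) (ginv a').
Proof.
  intros Ha; unfold eqv; eapply N_eq;
  [exact (nsinv _ _ HN _ (nsconj _ _ HN a _ Ha))| gsimpl; reflexivity].
Qed.

Definition canon (G : Grp) (N : G -> Prop) (g : G) : G :=
  epsilon (inhabits gone) (fun h => eqv G N g h).

Lemma canon_spec G N (HN : nsub G N) g : eqv G N g (canon G N g).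
Proof. unfold canon; apply epsilon_spec; exists g; apply eqv_refl; auto. Qed.

Lemma canon_eq G N (HN : nsub G N) g h : eqv G N g h -> canon G N g = canon G N h.
Proof.
  intro E. unfold canon. f_equal. apply functional_extensionality; intro k.
  apply propositional_extensionality; split; intro.
  - eapply eqv_trans; eauto. apply eqv_sym; auto.
  - eapply eqv_trans; eauto.
Qed.

Lemma canon_idem G N (HN : nsub G N) g : canon G N (canon G N g) = canon G N g.
Proof. symmetry; apply canon_eq; auto; apply canon_spec; auto. Qed.

Lemma canon_eqv G N (HN : nsub G N) g h : canon G N g = canon G N h -> eqv G N g h.
Proof.
  intro E. apply eqv_trans with (canon G N g); auto. apply canon_spec; auto.
  rewrite E. apply eqv_sym; auto. apply canon_spec; auto.
Qed.

Definition QC (G : Grp) (N : G -> Prop) := {g : G | canon G N g = g}.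

Definition mk G N (HN : nsub G N) (g : G) : QC G N := exist _ (canon G N g) (canon_idem G N HN g).

Lemma QC_eq G N (a b : QC G N) : proj1_sig a = proj1_sig b -> a = b.
Proof. destruct a, b; simpl; intro; subst; f_equal; apply proof_irrelevance. Qed.

Lemma mk_surj G N (HN : nsub G N) (a : QC G N) : exists g, mk G N HN g = a.
Proof. exists (proj1_sig a). apply QC_eq. destruct a; simpl; auto. Qed.

Lemma mk_eq G N (HN : nsub G N) g h : mk G N HN g = mk G N HN h <-> eqv G N g h.
Proof.
  split; intro E.
  - apply canon_eqv; auto. exact (f_equal (@proj1_sig _ _) E).
  - apply QC_eq; simpl; apply canon_eq; auto.
Qed.

Definition qmul G N (HN : nsub G N) (a b : QC G N) : QC G N :=
  mk G N HN (gmul (proj1_sig a) (proj1_sig b)).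
Definition qinv G N (HN : nsub G N) (a : QC G N) : QC G N :=
  mk G N HN (ginv (proj1_sig a)).

Lemma qmul_mk G N (HN : nsub G N) g h : qmul G N HN (mk G N HN g) (mk G N HN h) = mk G N HN (gmul g h).
Proof. unfold qmul; apply mk_eq; simpl; apply eqv_mul; auto; apply eqv_sym; auto; apply canon_spec; auto. Qed.
Lemma qinv_mk G N (HN : nsub G N) g : qinv G N HN (mk G N HN g) = mk G N HN (ginv g).
Proof. unfold qinv; apply mk_eq; simpl; apply eqv_inv; auto; apply eqv_sym; auto; apply canon_spec; auto. Qed.

Lemma qA G N (HN : nsub G N) a b c :
  qmul G N HN a (qmul G N HN b c) = qmul G N HN (qmul G N HN a b) c.
Proof.
  destruct (mk_surj G N HN a) as [x <-]; destruct (mk_surj G N HN b) as [y <-];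
  destruct (mk_surj G N HN c) as [z <-]. rewrite !qmul_mk, gmulA. reflexivity.
Qed.
Lemma q1g G N (HN : nsub G N) a : qmul G N HN (mk G N HN gone) a = a.
Proof. destruct (mk_surj G N HN a) as [x <-]. rewrite qmul_mk, gmul1g. reflexivity. Qed.
Lemma qg1 G N (HN : nsub G N) a : qmul G N HN a (mk G N HN gone) = a.
Proof. destruct (mk_surj G N HN a) as [x <-]. rewrite qmul_mk, gmulg1. reflexivity. Qed.
Lemma qVg G N (HN : nsub G N) a : qmul G N HN (qinv G N HN a) a = mk G N HN gone.
Proof. destruct (mk_surj G N HN a) as [x <-]. rewrite qinv_mk, qmul_mk, gmulVg. reflexivity. Qed.
Lemma qgV G N (HN : nsub G N) a : qmul G N HN a (qinv G N HN a) = mk G N HN gone.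
Proof. destruct (mk_surj G N HN a) as [x <-]. rewrite qinv_mk, qmul_mk, gmulgV. reflexivity. Qed.

Definition Quot G N (HN : nsub G N) : Grp :=
  {| gcar := QC G N; gmul := qmul G N HN; gone := mk G N HN gone; ginv := qinv G N HN;
     gmulA := qA G N HN; gmul1g := q1g G N HN; gmulg1 := qg1 G N HN;
     gmulVg := qVg G N HN; gmulgV := qgV G N HN |}.

Definition qproj G N (HN : nsub G N) : G -> Quot G N HN := mk G N HN.

Lemma qproj_hom G N (HN : nsub G N) : is_hom (qproj G N HN).
Proof. intros a b. symmetry. exact (qmul_mk G N HN a b). Qed.

Lemma qproj_surj G N (HN : nsub G N) : surj (qproj G N HN).
Proof. intro b. exact (mk_surj G N HN b). Qed.

Lemma qproj_ker G N (HN : nsub G N) g : qproj G N HN g = gone <-> N g.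
Proof.
  unfold qproj. change (mk G N HN g = mk G N HN gone <-> N g). rewrite mk_eq. unfold eqv.
  rewrite gmulg1. split; intro H.
  - rewrite <- (ginv_inv _ g). apply (nsinv _ _ HN); auto.
  - apply (nsinv _ _ HN); auto.
Qed.

Lemma derived_nsub (G : Grp) : nsub G (derived G).
Proof.
  constructor. apply der_1. apply der_mul. apply der_inv.
  intros g u Hu. eapply N_eq. exact (der_mul _ _ _ Hu (der_comm _ u (ginv g))).
  unfold comm. gsimpl. reflexivity.
Qed.

Lemma ncl_nsub (G : Grp) (r : G) : nsub G (ncl r).
Proof.
  constructor. apply ncl_1. apply ncl_mul. apply ncl_inv.
  intros g u Hu. induction Hu.
  - eapply N_eq. apply ncl_1. gsimpl. reflexivity.
  - eapply N_eq. apply (ncl_conj r (gmul g g0)). gsimpl. reflexivity.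
  - eapply N_eq. apply (ncl_mul _ _ _ IHHu1 IHHu2). gsimpl. reflexivity.
  - eapply N_eq. apply (ncl_inv _ _ IHHu). gsimpl. reflexivity.
Qed.

Lemma quot_der_abelian (G : Grp) : abelian (Quot G (derived G) (derived_nsub G)).
Proof.
  intros a b.
  destruct (mk_surj _ _ (derived_nsub G) a) as [g <-]; destruct (mk_surj _ _ (derived_nsub G) b) as [h <-].
  change (qmul _ _ (derived_nsub G) (mk _ _ (derived_nsub G) g) (mk _ _ (derived_nsub G) h) =
          qmul _ _ (derived_nsub G) (mk _ _ (derived_nsub G) h) (mk _ _ (derived_nsub G) g)).
  rewrite !qmul_mk. apply mk_eq. unfold eqv. eapply N_eq. apply (der_comm G h g).
  unfold comm. gsimpl. reflexivity.
Qed.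

Lemma hom_kills_derived (G H : Grp) (f : G -> H) : is_hom f -> abelian H ->
  forall u, derived G u -> f u = gone.
Proof.
  intros hf ab u Hu. induction Hu.
  - apply hom_one; auto.
  - unfold comm. rewrite !hf, !(hom_inv _ _ f hf). rewrite (ab (f g) (f h)). gsimpl. reflexivity.
  - rewrite hf, IHHu1, IHHu2, gmul1g. reflexivity.
  - rewrite (hom_inv _ _ f hf), IHHu, ginv_one. reflexivity.
Qed.

Lemma rel1_hom (G H : Grp) (f : G -> H) (hf : is_hom f) (a b : G) n :
  gmul (gpowN a n) (ginv (gpowN b 2)) = gone ->
  gmul (gpowN (f a) n) (ginv (gpowN (f b) 2)) = gone.
Proof.
  intro E. rewrite <- !(hom_gpowN _ _ f hf), <- (hom_inv _ _ f hf), <- hf, E. apply hom_one; auto.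
Qed.

Lemma rel2_hom (G H : Grp) (f : G -> H) (hf : is_hom f) (a b : G) :
  f (gmul a (gmul b (gmul a (ginv b)))) = gone ->
  gmul (f a) (gmul (f b) (gmul (f a) (ginv (f b)))) = gone.
Proof. intro E. rewrite <- (hom_inv _ _ f hf), <- !hf. exact E. Qed.

Theorem proposition3p7 (n : nat) (ns ms : list Z)
  (hn : (2 <= n)%nat)
  (hk : (1 <= length ns)%nat)
  (hlen : length ms = length ns)
  (hns : forall z, In z ns -> z <> 0%Z)
  (hms : forall z, In z ms -> z <> 0%Z)
  (G : Grp) (x y : G) (hG : presents G x y (Pn_rels n ns ms))
  (Q : Grp) (qx qy : Q) (hQ : presents Q qx qy (Q4n_rels n)) :
  (* (i) G/N ~ Q_{4n}, x |-> x, y |-> y, N = normal closure of x y x y^-1 *)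
  (exists f : G -> Q,
      is_hom f /\ surj f /\ f x = qx /\ f y = qy /\
      (forall g, f g = gone <-> ncl (gmul x (gmul y (gmul x (ginv y)))) g)) /\
  (* (ii) G^ab ~ Q_{4n}^ab: a common abelian quotient A realising both *)
  (exists (A : Grp) (f : G -> A) (h : Q -> A),
      abelian A /\
      is_hom f /\ surj f /\ (forall g, f g = gone <-> derived G g) /\
      is_hom h /\ surj h /\ (forall q, h q = gone <-> derived Q q)).
Proof.
  destruct hG as [RG [genG univG]]. destruct hQ as [RQ [genQ univQ]].
  assert (G1 : gmul (gpowN x n) (ginv (gpowN y 2)) = gone) by (apply RG; simpl; auto).
  assert (G2 : Pn_word x y ns ms = gone) by (apply RG; simpl; auto).
  assert (Q1 : gmul (gpowN qx n) (ginv (gpowN qy 2)) = gone) by (apply RQ; simpl; auto).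
  assert (Q2 : gmul qx (gmul qy (gmul qx (ginv qy))) = gone) by (apply RQ; simpl; auto).
  destruct (univG Q qx qy) as [f [hf [fx fy]]].
  { intros r Hr. destruct Hr as [<-|[<-|[]]]. exact Q1. apply word_Q; auto. }
  assert (fs : surj f).
  { intro q. pose proof (genQ q) as Hq. induction Hq.
    - exists gone. apply hom_one; auto.
    - exists x; auto.
    - exists y; auto.
    - destruct IHHq1 as [g1 <-], IHHq2 as [g2 <-]. exists (gmul g1 g2). apply hf.
    - destruct IHHq as [g1 <-]. exists (ginv g1). apply hom_inv; auto. }
  split.
  - exists f. repeat split; auto.
    + intro E.
      set (r := gmul x (gmul y (gmul x (ginv y)))).
      pose (HN := ncl_nsub G r).
      destruct (univQ (Quot G (ncl r) HN) (qproj _ _ HN x) (qproj _ _ HN y)) as [h [hh [hx hy]]].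
      { intros r' Hr. destruct Hr as [<-|[<-|[]]].
        - apply rel1_hom; auto. apply qproj_hom.
        - apply rel2_hom. apply qproj_hom. apply qproj_ker. fold r.
          eapply N_eq. apply (ncl_conj r gone). gsimpl. reflexivity. }
      assert (Ag : forall u, gen2 x y u -> h (f u) = qproj _ _ HN u).
      { apply hom_agree. intros a b; rewrite hf, hh; reflexivity. apply qproj_hom.
        rewrite fx; auto. rewrite fy; auto. }
      apply (qproj_ker _ _ HN). rewrite <- Ag by apply genG. rewrite E. apply hom_one; auto.
    + intro Hn. induction Hn.
      * apply hom_one; auto.
      * rewrite hf, hf, (hom_inv _ _ f hf).
        assert (Er : f (gmul x (gmul y (gmul x (ginv y)))) = gone).
        { rewrite !hf, (hom_inv _ _ f hf), fx, fy. exact Q2. }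
        rewrite Er. gsimpl. reflexivity.
      * rewrite hf, IHHn1, IHHn2, gmul1g. reflexivity.
      * rewrite (hom_inv _ _ f hf), IHHn, ginv_one. reflexivity.
  - pose (HQd := derived_nsub Q). pose (HGd := derived_nsub G).
    exists (Quot Q (derived Q) HQd), (fun g => qproj _ _ HQd (f g)), (qproj _ _ HQd).
    assert (hfA : is_hom (fun g => qproj _ _ HQd (f g))).
    { intros a b. rewrite hf. apply qproj_hom. }
    split. apply quot_der_abelian.
    split. exact hfA.
    split.
    { intro b. destruct (qproj_surj _ _ HQd b) as [q <-]. destruct (fs q) as [g <-]. exists g; auto. }
    split.
    { intro g. split; intro E.
      - apply (qproj_ker _ _ HQd) in E.
        destruct (univQ (Quot G (derived G) HGd) (qproj _ _ HGd x) (qproj _ _ HGd y)) as [h [hh [hx hy]]].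
        { intros r' Hr. destruct Hr as [<-|[<-|[]]].
          - apply rel1_hom; auto. apply qproj_hom.
          - pose proof (quot_der_abelian G) as ab.
            assert (W : Pn_word (qproj _ _ HGd x) (qproj _ _ HGd y) ns ms = gone).
            { rewrite <- (hom_word _ _ _ (qproj_hom _ _ HGd)), G2. reflexivity. }
            rewrite (word_ab _ _ _ _ _ ab hlen) in W.
            rewrite (ab (qproj _ _ HGd y)), <- gmulA, gmulVg, gmulg1. exact W. }
        assert (Ag : forall u, gen2 x y u -> h (f u) = qproj _ _ HGd u).
        { apply hom_agree. intros a b; rewrite hf, hh; reflexivity. apply qproj_hom.
          rewrite fx; auto. rewrite fy; auto. }
        apply (qproj_ker _ _ HGd). rewrite <- Ag by apply genG.
        apply (hom_kills_derived _ _ h hh (quot_der_abelian G)). exact E.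
      - apply (hom_kills_derived _ _ _ hfA (quot_der_abelian Q)). exact E. }
    split. apply qproj_hom.
    split. apply qproj_surj.
    intro q. apply qproj_ker.
Qed.
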